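(* Let $n$ and $m$ be integers with $n\geq 5$ and $m\geq 5$. For each $G\in T_{n,m}$ whose terminals $s$ and $t$ are true twins and which has at least one $3$-irrelevant edge, there exists $H\in T_{n,m}^*$ that is $3$-stronger than $G$.
   Context: All graphs are finite, simple and undirected. A two-terminal graph is a graph $G$ together with two distinguished vertices $s,t$ (the terminals). $T_{n,m}$ denotes the set of all pairwise nonisomorphic (with isomorphisms preserving the set of terminals) two-terminal graphs with $n$ vertices and $m$ edges. Two vertices $u,v$ are true twins if $N[u]=N[v]$ (closed neighborhoods). For a positive integer $d$, a $d$-pathset of a two-terminal graph $G$ is a spanning subgraph of $G$ containing a path of length (number of edges) at most $d$ joining $s$ and $t$; $N_i^d(G)$ is the number of $d$-pathsets of $G$ with exactly $i$ edges. An edge $e$ of $G$ is $d$-irrelevant if for every $d$-pathset $H$ of $G$ containing $e$, $H-e$ is also a $d$-pathset. $T_{n,m}^*$ is the set of graphs in $T_{n,m}$ with no $3$-irrelevant edges whose terminals are true twins. For $G,H\in T_{n,m}$, $H$ is $d$-stronger than $G$ if $N_i^d(H)\geq N_i^d(G)$ for every $i\in\{1,\ldots,m\}$ and $N_j^d(H)>N_j^d(G)$ for some $j\in\{1,\ldots,m\}$. *)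

(* Defs.v *)
From mathcomp Require Import all_boot.
Set Implicit Arguments. Unset Strict Implicit. Unset Printing Implicit Defensive.

Definition simple_graph (n : nat) (E : {set {set 'I_n}}) : bool :=
  [forall e in E, #|e| == 2].

Definition two_terminal (n : nat) (E : {set {set 'I_n}}) (s t : 'I_n) : bool :=
  simple_graph E && (s != t).

Definition adj (n : nat) (E : {set {set 'I_n}}) : rel 'I_n :=
  fun u v => [set u; v] \in E.

(* F contains a path (no repeated vertices) from s to t with at most d edges;
   the path is s :: p, its length is size p. *)
Definition is_st_path (n : nat) (F : {set {set 'I_n}}) (s t : 'I_n) (p : seq 'I_n) : bool :=
  [&& path (adj F) s p, uniq (s :: p) & last s p == t].

Definition has_short_path (n : nat) (d : nat) (F : {set {set 'I_n}}) (s t : 'I_n) : bool :=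
  [exists k : 'I_d.+1, [exists p : k.-tuple 'I_n, is_st_path F s t p]].

(* a d-pathset of (E,s,t): a spanning subgraph, i.e. an edge subset F of E,
   containing an s-t path of length at most d *)
Definition pathset (n d : nat) (E F : {set {set 'I_n}}) (s t : 'I_n) : Prop :=
  F \subset E /\ has_short_path d F s t.

Definition Ncount (n d : nat) (E : {set {set 'I_n}}) (s t : 'I_n) (i : nat) : nat :=
  #|[set F in powerset E | (#|F| == i) && has_short_path d F s t]|.

Definition irrelevant (n d : nat) (E : {set {set 'I_n}}) (s t : 'I_n) (e : {set 'I_n}) : Prop :=
  e \in E /\
  forall F : {set {set 'I_n}}, pathset d E F s t -> e \in F -> pathset d E (F :\ e) s t.

Definition closed_nbhd (n : nat) (E : {set {set 'I_n}}) (u : 'I_n) : {set 'I_n} :=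
  u |: [set v | adj E u v].

Definition true_twins (n : nat) (E : {set {set 'I_n}}) (u v : 'I_n) : Prop :=
  closed_nbhd E u = closed_nbhd E v.

Definition stronger (n d m : nat) (EH : {set {set 'I_n}}) (sH tH : 'I_n)
    (EG : {set {set 'I_n}}) (sG tG : 'I_n) : Prop :=
  (forall i, 1 <= i <= m -> Ncount d EG sG tG i <= Ncount d EH sH tH i) /\
  (exists j, 1 <= j <= m /\ Ncount d EG sG tG j < Ncount d EH sH tH j).

(* Main.v *)
Require Import Defs.
From mathcomp Require Import all_boot.
From mathcomp Require Import zify.
Set Implicit Arguments. Unset Strict Implicit. Unset Printing Implicit Defensive.

Lemma hsp_mono n (s t : 'I_n) (F F' : {set {set 'I_n}}) :
  F \subset F' -> has_short_path 3 F s t -> has_short_path 3 F' s t.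
Proof.
move=> sub /existsP [k /existsP [p hp]]; apply/existsP; exists k; apply/existsP; exists p.
move: hp; rewrite /is_st_path => /and3P [hpath hu hl]; rewrite hu hl andbT.
rewrite andbT; move: hpath; apply: sub_path => u v; rewrite /adj => h; exact: (subsetP sub).
Qed.

Lemma hspE n (s t : 'I_n) (F : {set {set 'I_n}}) : s != t -> has_short_path 3 F s t ->
  [set s; t] \in F \/ (exists x, [/\ x != s, x != t, [set s;x] \in F & [set x;t] \in F]) \/
  (exists x y, [/\ x != s, x != t, y != s, y != t & [&& x != y, [set s;x] \in F, [set x;y] \in F & [set y;t] \in F]]).
Proof.
move=> hst; case/existsP => [[k hk]] /existsP [[l /= /eqP sz]]; rewrite /is_st_path /adj.
case: l sz => [|x [|y [|z [|w l]]]] //= sz.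
- by move=> e; rewrite e in hst.
- move=> /and3P [h1 _ /eqP e]; subst x; left; by rewrite andbT in h1.
- move=> /and3P [h1 h2 /eqP e]; subst y; move: h1 h2; rewrite !inE !andbT !negb_or => /andP [h1 h2] /andP [/andP [hsx _] hxt].
  right; left; exists x; split => //; by rewrite eq_sym.
- move=> /and3P [h1 h2 /eqP e]; subst z; move: h1 h2; rewrite !inE !andbT !negb_or => /and3P [h1 h2 h3] /and3P [/and3P [hsx hsy hsz] /andP [hxy hxz] hyz].
  right; right; exists x, y; split => //; try by rewrite eq_sym.
  by rewrite hxy h1 h2 h3.
- by move: hk; rewrite -sz.
Qed.

Lemma hsp1 n (s t : 'I_n) (F : {set {set 'I_n}}) : s != t -> [set s; t] \in F -> has_short_path 3 F s t.
Proof.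
move=> hst h; apply/existsP; exists (Ordinal (isT : 1 < 4)); apply/existsP; exists [tuple t].
by rewrite /is_st_path /= /adj h !inE hst eqxx.
Qed.

Lemma hsp2 n (s t x : 'I_n) (F : {set {set 'I_n}}) : s != t -> x != s -> x != t ->
  [set s; x] \in F -> [set x; t] \in F -> has_short_path 3 F s t.
Proof.
move=> hst hxs hxt h1 h2; apply/existsP; exists (Ordinal (isT : 2 < 4)); apply/existsP; exists [tuple x; t].
rewrite /is_st_path /= /adj h1 h2 !inE.
by rewrite (eq_sym s x) (negbTE hxs) (negbTE hst) hxt eqxx.
Qed.

Lemma hsp3 n (s t x y : 'I_n) (F : {set {set 'I_n}}) : s != t -> x != s -> x != t -> y != s -> y != t -> x != y ->
  [set s; x] \in F -> [set x; y] \in F -> [set y; t] \in F -> has_short_path 3 F s t.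
Proof.
move=> hst hxs hxt hys hyt hxy h1 h2 h3; apply/existsP; exists (Ordinal (isT : 3 < 4)); apply/existsP; exists [tuple x; y; t].
rewrite /is_st_path /= /adj h1 h2 h3 !inE.
by rewrite (eq_sym s x) (eq_sym s y) (negbTE hxs) (negbTE hys) (negbTE hst) (negbTE hxy) (negbTE hxt) hyt eqxx.
Qed.

Lemma count_le n (s t : 'I_n) (E E' : {set {set 'I_n}}) (psi : {set {set 'I_n}} -> {set {set 'I_n}}) :
  (forall F : {set {set 'I_n}}, F \subset E -> has_short_path 3 F s t ->
     [/\ psi F \subset E', #|psi F| = #|F| & has_short_path 3 (psi F) s t]) ->
  (forall F1 F2 : {set {set 'I_n}}, F1 \subset E -> has_short_path 3 F1 s t -> F2 \subset E -> has_short_path 3 F2 s t ->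
     psi F1 = psi F2 -> F1 = F2) ->
  forall i, Ncount 3 E s t i <= Ncount 3 E' s t i.
Proof.
move=> hP hI i; rewrite /Ncount.
set S := [set F in powerset E | _].
rewrite -(card_in_imset (f := psi) (D := S)); last first.
  move=> F1 F2; rewrite !inE => /andP [h1 /andP [_ h1']] /andP [h2 /andP [_ h2']].
  exact: hI.
apply: subset_leq_card; apply/subsetP => G /imsetP [F]; rewrite !inE => /andP [h1 /andP [/eqP hc h1']] ->.
by case: (hP F h1 h1') => [a b c]; rewrite a b hc eqxx c.
Qed.

Lemma count_lt n (s t : 'I_n) (E E' : {set {set 'I_n}}) (psi : {set {set 'I_n}} -> {set {set 'I_n}}) (F0 : {set {set 'I_n}}) :
  (forall F : {set {set 'I_n}}, F \subset E -> has_short_path 3 F s t ->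
     [/\ psi F \subset E', #|psi F| = #|F| & has_short_path 3 (psi F) s t]) ->
  (forall F1 F2 : {set {set 'I_n}}, F1 \subset E -> has_short_path 3 F1 s t -> F2 \subset E -> has_short_path 3 F2 s t ->
     psi F1 = psi F2 -> F1 = F2) ->
  F0 \subset E' -> has_short_path 3 F0 s t ->
  (forall F : {set {set 'I_n}}, F \subset E -> has_short_path 3 F s t -> psi F <> F0) ->
  Ncount 3 E s t #|F0| < Ncount 3 E' s t #|F0|.
Proof.
move=> hP hI h0 h0' hN; rewrite /Ncount.
set S := [set F in powerset E | _].
rewrite -(card_in_imset (f := psi) (D := S)); last first.
  move=> F1 F2; rewrite !inE => /andP [h1 /andP [_ h1']] /andP [h2 /andP [_ h2']].
  exact: hI.
apply: proper_card; apply/properP; split.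
  apply/subsetP => G /imsetP [F]; rewrite !inE => /andP [h1 /andP [/eqP hc h1']] ->.
  by case: (hP F h1 h1') => [a b c]; rewrite a b hc eqxx c.
exists F0; first by rewrite !inE h0 eqxx h0'.
apply/imsetP => [[F]]; rewrite !inE => /andP [h1 /andP [_ h1']] e.
exact: (hN F h1 h1' (esym e)).
Qed.

Lemma sub2 n (u w : 'I_n) (X : {set 'I_n}) : ([set u; w] \subset X) = (u \in X) && (w \in X).
Proof. by rewrite subUset !sub1set. Qed.

Lemma inN n (E : {set {set 'I_n}}) (u x : 'I_n) : (x \in closed_nbhd E u) = (x == u) || ([set u; x] \in E).
Proof. by rewrite /closed_nbhd !inE /adj. Qed.

Lemma hsp_none n (s t x y : 'I_n) (A : {set {set 'I_n}}) : s != t -> x != y ->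
  [set s; t] \notin A -> [set x; y] \notin A ->
  (forall w, w != s -> [set s; w] \in A -> w = x) ->
  (forall w, w != t -> [set w; t] \in A -> w = y) -> ~~ has_short_path 3 A s t.
Proof.
move=> hst hxy h1 h2 hS hT; apply/negP => /(hspE hst) [h|[[w [hws hwt h3 h4]]|[w [z [hws hwt hzs hzt /and4P [hwz h3 h4 h5]]]]]].
- by rewrite h in h1.
- by move: hxy; rewrite -(hS w hws h3) -(hT w hwt h4) eqxx.
- by move: h2; rewrite -(hS w hws h3) -(hT z hzt h5) h4.
Qed.

Lemma tw_in_s n (E : {set {set 'I_n}}) (s x : 'I_n) : [set s; x] \in E -> x \in closed_nbhd E s.
Proof. by move=> h; rewrite inN h orbT. Qed.

Lemma tw_in_t n (E : {set {set 'I_n}}) (s t x : 'I_n) : true_twins E s t -> [set x; t] \in E -> x \in closed_nbhd E s.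
Proof. by rewrite /true_twins => -> h; rewrite inN setUC h orbT. Qed.

Lemma s_in n (E : {set {set 'I_n}}) (s : 'I_n) : s \in closed_nbhd E s.
Proof. by rewrite inN eqxx. Qed.

Lemma t_in n (E : {set {set 'I_n}}) (s t : 'I_n) : true_twins E s t -> t \in closed_nbhd E s.
Proof. by rewrite /true_twins => ->; exact: s_in. Qed.

Lemma tw_edge_s n (E : {set {set 'I_n}}) (s x : 'I_n) : x \in closed_nbhd E s -> x != s -> [set s; x] \in E.
Proof. by rewrite inN => /orP [/eqP -> |//]; rewrite eqxx. Qed.

Lemma tw_edge_t n (E : {set {set 'I_n}}) (s t x : 'I_n) : true_twins E s t -> x \in closed_nbhd E s -> x != t -> [set x; t] \in E.
Proof. by rewrite /true_twins => ->; rewrite inN => /orP [/eqP -> |h]; rewrite ?eqxx // setUC. Qed.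

Lemma out_irr n (E : {set {set 'I_n}}) (s t : 'I_n) (F : {set {set 'I_n}}) (g : {set 'I_n}) :
  s != t -> true_twins E s t -> F \subset E -> ~~ (g \subset closed_nbhd E s) ->
  has_short_path 3 F s t -> has_short_path 3 (F :\ g) s t.
Proof.
move=> hst tw hF hg hp.
have keep : forall e', e' \in F -> e' \subset closed_nbhd E s -> e' \in F :\ g.
  move=> e' h1 h2; rewrite !inE h1 andbT; apply/eqP => ee; by rewrite -ee h2 in hg.
have hS : forall x, [set s; x] \in F -> x \in closed_nbhd E s.
  move=> x h; apply: tw_in_s; exact: (subsetP hF).
have hT : forall x, [set x; t] \in F -> x \in closed_nbhd E s.
  move=> x h; apply: (tw_in_t tw); exact: (subsetP hF).
have sR := s_in E s; have tR := t_in tw.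
case/(hspE hst): hp => [h|[[w [hws hwt h3 h4]]|[w [z [hws hwt hzs hzt /and4P [hwz h3 h4 h5]]]]]].
- by apply: hsp1 => //; apply: keep; rewrite // sub2 sR tR.
- by apply: (hsp2 hst hws hwt); apply: keep; rewrite // sub2 ?sR ?tR ?(hS w h3) ?(hT w h4).
- by apply: (hsp3 hst hws hwt hzs hzt hwz); apply: keep; rewrite // sub2 ?sR ?tR ?(hS w h3) ?(hT z h5).
Qed.

Definition swap n (E : {set {set 'I_n}}) (g h : {set 'I_n}) := h |: (E :\ g).
Definition sw n (g h : {set 'I_n}) (F : {set {set 'I_n}}) := if g \in F then swap F g h else F.

Lemma card_swap n (E : {set {set 'I_n}}) g h : g \in E -> h \notin E -> #|swap E g h| = #|E|.
Proof.
move=> hg hh; rewrite /swap cardsU1 (cardsD1 g E) hg !inE negb_and hh orbT; done.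
Qed.

Lemma swap_sub n (E : {set {set 'I_n}}) g h : swap E g h \subset h |: E.
Proof. by apply/subsetP => x; rewrite !inE => /orP [->|/andP [_ ->]]; rewrite ?orbT. Qed.

Lemma sw_props n (s t : 'I_n) (E : {set {set 'I_n}}) g h :
  g \in E -> h \notin E ->
  (forall F : {set {set 'I_n}}, F \subset E -> has_short_path 3 F s t -> g \in F -> has_short_path 3 (swap F g h) s t) ->
  forall F : {set {set 'I_n}}, F \subset E -> has_short_path 3 F s t ->
    [/\ sw g h F \subset swap E g h, #|sw g h F| = #|F| & has_short_path 3 (sw g h F) s t].
Proof.
move=> hg hh hyp F hF hp; rewrite /sw; case: ifP => hgF.
- split; last exact: hyp.
  + apply/subsetP => x; rewrite /swap !inE => /orP [->//|/andP [hne hx]]; by rewrite hne (subsetP hF x hx) orbT.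
  + apply: card_swap => //; apply: contra hh; exact: (subsetP hF).
- split => //; apply/subsetP => x hx; rewrite /swap !inE (subsetP hF) // andbT orbC.
  by apply/orP; left; apply/eqP => ex; rewrite -ex hx in hgF.
Qed.

Lemma sw_inj n (E : {set {set 'I_n}}) g h (F1 F2 : {set {set 'I_n}}) :
  h \notin E -> F1 \subset E -> F2 \subset E -> sw g h F1 = sw g h F2 -> F1 = F2.
Proof.
move=> hh h1 h2; rewrite /sw /swap.
have nh : forall F : {set {set 'I_n}}, F \subset E -> h \notin F by move=> F hF; apply: contra hh; exact: (subsetP hF).
have nh' : forall F : {set {set 'I_n}}, F \subset E -> h \notin F :\ g by move=> F hF; rewrite !inE negb_and (nh F hF) orbT.
case: ifP => g1; case: ifP => g2.
- move=> e; have := congr1 (fun X => X :\ h) e; rewrite !setU1K ?nh' // => e2.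
  by rewrite -(setD1K g1) -(setD1K g2) e2.
- by move=> e; have := nh F2 h2; rewrite -e setU11.
- by move=> e; have := nh F1 h1; rewrite e setU11.
- done.
Qed.

Lemma swap_le n (s t : 'I_n) (E : {set {set 'I_n}}) g h :
  g \in E -> h \notin E ->
  (forall F : {set {set 'I_n}}, F \subset E -> has_short_path 3 F s t -> g \in F -> has_short_path 3 (swap F g h) s t) ->
  forall i, Ncount 3 E s t i <= Ncount 3 (swap E g h) s t i.
Proof.
move=> hg hh hyp; apply: (count_le (psi := sw g h)).
  exact: sw_props.
move=> F1 F2 h1 _ h2 _; exact: (sw_inj hh h1 h2).
Qed.

Lemma swap_lt n (s t : 'I_n) (E : {set {set 'I_n}}) g h (F0 : {set {set 'I_n}}) :
  g \in E -> h \notin E ->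
  (forall F : {set {set 'I_n}}, F \subset E -> has_short_path 3 F s t -> g \in F -> has_short_path 3 (swap F g h) s t) ->
  F0 \subset swap E g h -> has_short_path 3 F0 s t -> h \in F0 -> ~~ has_short_path 3 (swap F0 h g) s t ->
  Ncount 3 E s t #|F0| < Ncount 3 (swap E g h) s t #|F0|.
Proof.
move=> hg hh hyp h0 h0' hF0 hn; apply: (count_lt (psi := sw g h)) => //.
- exact: sw_props.
- move=> F1 F2 h1 _ h2 _; exact: (sw_inj hh h1 h2).
move=> F hF hp; rewrite /sw; case: ifP => hgF e.
- move: hn; rewrite -e /swap setU1K ?setD1K ?hp //.
  by rewrite !inE negb_and; apply/orP; right; apply: contra hh; exact: (subsetP hF).
- by move: hh; rewrite (subsetP hF) // e.
Qed.

Lemma eq2_mem n (a b c d : 'I_n) : [set a; b] = [set c; d] -> (a == c) || (a == d).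
Proof. by move=> e; have := set21 a b; rewrite e !inE. Qed.

Lemma eq2_mem' n (a b c d : 'I_n) : [set a; b] = [set c; d] -> (b == c) || (b == d).
Proof. by rewrite setUC => /eq2_mem. Qed.

Lemma hsp_none2 n (s t x y : 'I_n) (A : {set {set 'I_n}}) : s != t -> x != y -> x != t -> y != s ->
  A \subset [set [set s; x]; [set y; t]] -> ~~ has_short_path 3 A s t.
Proof.
move=> hst hxy hxt hys hA.
have mem : forall g, g \in A -> (g == [set s; x]) || (g == [set y; t]).
  by move=> g hg; have := subsetP hA g hg; rewrite !inE.
apply: (hsp_none hst hxy).
- apply/negP => /mem /orP [] /eqP e.
  + by move: (eq2_mem' e); rewrite eq_sym (negbTE hst) eq_sym (negbTE hxt).
  + by move: (eq2_mem e); rewrite eq_sym (negbTE hys) (negbTE hst).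
- apply/negP => /mem /orP [] /eqP e.
  + by move: (eq2_mem' e); rewrite (negbTE hys) eq_sym (negbTE hxy).
  + by move: (eq2_mem e); rewrite (negbTE hxy) (negbTE hxt).
- move=> w hw /mem /orP [] /eqP e.
  + by move: (eq2_mem' e); rewrite (negbTE hw) => /eqP.
  + by move: (eq2_mem e); rewrite eq_sym (negbTE hys) (negbTE hst).
- move=> w hw /mem /orP [] /eqP e.
  + by move: (eq2_mem' e); rewrite eq_sym (negbTE hst) eq_sym (negbTE hxt).
  + by move: (eq2_mem e); rewrite (negbTE hw) orbF => /eqP.
Qed.

Lemma not_irr_gen n (E F : {set {set 'I_n}}) (s t : 'I_n) e :
  F \subset E -> has_short_path 3 F s t -> e \in F -> ~~ has_short_path 3 (F :\ e) s t ->
  ~ irrelevant 3 E s t e.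
Proof. by move=> hF hp he hn [_ h]; case: (h F (conj hF hp) he) => _ h'; rewrite h' in hn. Qed.

Lemma rel_st n (E : {set {set 'I_n}}) (s t : 'I_n) : s != t -> true_twins E s t ->
  ~ irrelevant 3 E s t [set s; t].
Proof.
move=> hst tw; apply: (not_irr_gen (F := [set [set s; t]])).
- by rewrite sub1set; apply: tw_edge_s; rewrite ?(t_in tw) // eq_sym.
- by apply: hsp1; rewrite ?set11.
- by rewrite set11.
- apply: (hsp_none2 (x := s) (y := t)) => //; rewrite 1?eq_sym //.
  by apply/subsetP => g; rewrite !inE => /andP [/negbTE ->].
Qed.

Lemma rel_sz n (E : {set {set 'I_n}}) (s t z : 'I_n) : s != t -> true_twins E s t ->
  z \in closed_nbhd E s -> z != s -> z != t ->
  ~ irrelevant 3 E s t [set s; z].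
Proof.
move=> hst tw hz hzs hzt; apply: (not_irr_gen (F := [set [set s; z]; [set z; t]])).
- by apply/subsetP => g; rewrite !inE => /orP [] /eqP ->; [apply: tw_edge_s | apply: (tw_edge_t tw)].
- by apply: (hsp2 hst hzs hzt); rewrite !inE eqxx ?orbT.
- by rewrite !inE eqxx.
- apply: (hsp_none2 (x := s) (y := z)) => //; rewrite 1?eq_sym //.
  by apply/subsetP => g; rewrite !inE => /andP [/negbTE -> /=] ->; rewrite orbT.
Qed.

Lemma rel_zt n (E : {set {set 'I_n}}) (s t z : 'I_n) : s != t -> true_twins E s t ->
  z \in closed_nbhd E s -> z != s -> z != t ->
  ~ irrelevant 3 E s t [set z; t].
Proof.
move=> hst tw hz hzs hzt; apply: (not_irr_gen (F := [set [set s; z]; [set z; t]])).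
- by apply/subsetP => g; rewrite !inE => /orP [] /eqP ->; [apply: tw_edge_s | apply: (tw_edge_t tw)].
- by apply: (hsp2 hst hzs hzt); rewrite !inE eqxx ?orbT.
- by rewrite !inE eqxx orbT.
- apply: (hsp_none2 (x := z) (y := t)) => //; rewrite 1?eq_sym //.
  by apply/subsetP => g; rewrite !inE => /andP [/negbTE ->]; rewrite orbF => ->.
Qed.

Lemma rel_xy n (E : {set {set 'I_n}}) (s t x y : 'I_n) : s != t -> true_twins E s t ->
  x \in closed_nbhd E s -> x != s -> x != t ->
  y \in closed_nbhd E s -> y != s -> y != t -> x != y -> [set x; y] \in E ->
  ~ irrelevant 3 E s t [set x; y].
Proof.
move=> hst tw hx hxs hxt hy hys hyt hxy hE; apply: (not_irr_gen (F := [set [set s; x]; [set x; y]; [set y; t]])).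
- apply/subsetP => g; rewrite !inE => /orP [/orP [] |] /eqP -> //; [apply: tw_edge_s | apply: (tw_edge_t tw)] => //.
- by apply: (hsp3 hst hxs hxt hys hyt hxy); rewrite !inE eqxx ?orbT.
- by rewrite !inE eqxx orbT.
- apply: (hsp_none2 (x := x) (y := y)) => //.
  apply/subsetP => g; rewrite !inE => /andP [ne] /orP [/orP [] |] /eqP eg; rewrite eg ?eqxx ?orbT //.
  by rewrite eg eqxx in ne.
Qed.

Definition outs n (E : {set {set 'I_n}}) (s : 'I_n) := [set g in E | ~~ (g \subset closed_nbhd E s)].

Lemma no_irr n (E : {set {set 'I_n}}) (s t : 'I_n) : two_terminal E s t -> true_twins E s t ->
  outs E s = set0 -> forall e, ~ irrelevant 3 E s t e.
Proof.
move=> /andP [/forallP sg hst] tw ho e hirr.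
have heE : e \in E by case: hirr.
have hsub : e \subset closed_nbhd E s.
  apply: contraT => hn; have : e \in outs E s by rewrite inE heE hn.
  by rewrite ho inE.
have := sg e; rewrite heE /= => /cards2P [x [y [hxy ee]]]; subst e.
move: hsub; rewrite sub2 => /andP [hx hy].
case: (eqVneq x s) => [exs | hxs].
  subst x; case: (eqVneq y t) => [eyt | hyt].
    by subst y; exact: (rel_st hst tw hirr).
  by apply: (rel_sz hst tw hy _ hyt hirr); rewrite eq_sym.
case: (eqVneq x t) => [ext | hxt].
  subst x; case: (eqVneq y s) => [eys | hys].
    by subst y; rewrite setUC in hirr; exact: (rel_st hst tw hirr).
  by rewrite setUC in hirr; apply: (rel_zt hst tw hy hys _ hirr); rewrite eq_sym.
case: (eqVneq y s) => [eys | hys].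
  by subst y; rewrite setUC in hirr; exact: (rel_sz hst tw hx hxs hxt hirr).
case: (eqVneq y t) => [eyt | hyt].
  by subst y; exact: (rel_zt hst tw hx hxs hxt hirr).
exact: (rel_xy hst tw hx hxs hxt hy hys hyt hxy heE hirr).
Qed.

Lemma recF n (g f : {set 'I_n}) (F1 F2 : {set {set 'I_n}}) :
  F1 :\ g :\ f = F2 :\ g :\ f -> (g \in F1) = (g \in F2) -> (f \in F1) = (f \in F2) -> F1 = F2.
Proof.
move=> e eg ef; apply/setP => h.
case: (eqVneq h g) => [->//|hg]; case: (eqVneq h f) => [->//|hf].
by move/setP: e => /(_ h); rewrite !inE hg hf.
Qed.

Section T2.
Variables (n : nat) (E : {set {set 'I_n}}) (s t v c1 c2 : 'I_n) (g : {set 'I_n}).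
Hypotheses (hst : s != t) (tw : true_twins E s t) (gE : g \in E)
  (gout : ~~ (g \subset closed_nbhd E s)) (vout : v \notin closed_nbhd E s)
  (c1R : c1 \in closed_nbhd E s) (c2R : c2 \in closed_nbhd E s)
  (c1s : c1 != s) (c1t : c1 != t) (c2s : c2 != s) (c2t : c2 != t) (c12 : c1 != c2)
  (fE : [set c1; c2] \in E).

Local Notation hsp F := (has_short_path 3 F s t).
Local Notation f := [set c1; c2].
Local Notation a := [set s; v].
Local Notation b := [set v; t].

Lemma notf_s w : [set s; w] != f.
Proof. apply/eqP => /eq2_mem; by rewrite eq_sym (negbTE c1s) eq_sym (negbTE c2s). Qed.

Lemma notf_t w : [set w; t] != f.
Proof. apply/eqP => /eq2_mem'; by rewrite eq_sym (negbTE c1t) eq_sym (negbTE c2t). Qed.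

Lemma ori (A : {set {set 'I_n}}) : ~~ hsp A -> hsp (f |: A) ->
  ([set s; c1] \in A) && ([set c2; t] \in A) || ([set s; c2] \in A) && ([set c1; t] \in A).
Proof.
move=> hn /(hspE hst) [h|[[w [hws hwt h3 h4]]|[w [z [hws hwt hzs hzt /and4P [hwz h3 h4 h5]]]]]].
- move: h; rewrite in_setU1 (negbTE (notf_s t)) /= => h.
  by rewrite (hsp1 hst h) in hn.
- move: h3 h4; rewrite !in_setU1 (negbTE (notf_s w)) (negbTE (notf_t w)) /= => h3 h4.
  by rewrite (hsp2 hst hws hwt h3 h4) in hn.
- move: h3 h5; rewrite !in_setU1 (negbTE (notf_s w)) (negbTE (notf_t z)) /= => h3 h5.
  move: h4; rewrite in_setU1 => /orP [/eqP e|h4]; last by rewrite (hsp3 hst hws hwt hzs hzt hwz h3 h4 h5) in hn.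
  have := eq2_mem e; have := eq2_mem' e.
  case/orP => /eqP ez; case/orP => /eqP ew; subst w z; rewrite ?eqxx in hwz => //.
  + by rewrite h3 h5 orbT.
  + by rewrite h3 h5.
Qed.


Lemma vs : v != s. Proof. by apply: contra vout => /eqP ->; exact: s_in. Qed.
Lemma vt : v != t. Proof. by apply: contra vout => /eqP ->; exact: t_in. Qed.
Lemma aE : a \notin E. Proof. by apply: contra vout => h; exact: tw_in_s h. Qed.
Lemma bE : b \notin E. Proof. by apply: contra vout => h; exact: tw_in_t tw h. Qed.
Lemma notf_g : f != g.
Proof. apply/eqP => e; move: gout; rewrite -e sub2 c1R c2R //. Qed.

Lemma ab : a != b.
Proof. apply/eqP => /eq2_mem; by rewrite eq_sym (negbTE vs) (negbTE hst). Qed.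

Definition xch (A : {set {set 'I_n}}) := if [set s; c1] \in A then [set s; c1] else [set s; c2].
Definition xr (A : {set {set 'I_n}}) := if [set c2; t] \in A then [set s; c1] else [set s; c2].

Lemma Qfacts (A : {set {set 'I_n}}) : ~~ hsp A -> hsp (f |: A) ->
  [/\ xch A \in A, ~~ hsp (f |: (A :\ xch A)), xr (A :\ xch A) = xch A & exists h, h \in A :\ xch A].
Proof.
move=> hn hp.
have nA' : forall x, ~~ hsp (A :\ x).
  by move=> x; apply: contra hn; apply: hsp_mono; exact: subD1set.
have ne1 : [set c2; t] != [set s; c1].
  by apply/eqP => /esym /eq2_mem; rewrite eq_sym (negbTE c2s) (negbTE hst).
have ne2 : [set c1; t] != [set s; c2].
  by apply/eqP => /esym /eq2_mem; rewrite eq_sym (negbTE c1s) (negbTE hst).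
case/orP: (ori hn hp) => /andP [h1 h2].
- have h3 : [set s; c2] \notin A.
    by apply: contra hn => h3; exact: (hsp2 hst c2s c2t h3 h2).
  rewrite /xch h1; split => //.
  + apply/negP => /(ori (nA' _)) /orP [] /andP []; rewrite !inE ?eqxx //.
    by move=> /andP [_ h4]; rewrite h4 in h3.
  + by rewrite /xr !inE ne1 h2.
  + by exists [set c2; t]; rewrite !inE ne1 h2.
- have h3 : [set s; c1] \notin A.
    by apply: contra hn => h3; exact: (hsp2 hst c1s c1t h3 h2).
  have h4 : [set c2; t] \notin A.
    by apply: contra hn => h4; exact: (hsp2 hst c2s c2t h1 h4).
  rewrite /xch (negbTE h3); split => //.
  + apply/negP => /(ori (nA' _)) /orP [] /andP []; rewrite !inE ?eqxx ?andbF //.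
    by move=> /andP [_ h5]; rewrite h5 in h3.
  + by rewrite /xr !inE (negbTE h4) andbF.
  + by exists [set c1; t]; rewrite !inE ne2 h2.
Qed.


Definition AF (F : {set {set 'I_n}}) := F :\ g :\ f.
Definition psi (F : {set {set 'I_n}}) :=
  if hsp (AF F) then
    (if f \in F then b |: (if g \in F then a |: AF F else AF F)
     else (if g \in F then a |: AF F else AF F))
  else if g \in F then b |: (a |: AF F) else b |: (a |: (AF F :\ xch (AF F))).

Definition E' := swap (swap E g a) f b.

Lemma inE' (h : {set 'I_n}) : (h \in E') = (h == b) || (h != f) && ((h == a) || (h != g) && (h \in E)).
Proof. by rewrite /E' /swap !inE. Qed.

Lemma AF_sub (F : {set {set 'I_n}}) : F \subset E -> AF F \subset E.
Proof. move=> hF; apply/subsetP => h; rewrite !inE => /and3P [_ _ h']; exact: (subsetP hF). Qed.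

Lemma a_AF (F : {set {set 'I_n}}) : F \subset E -> a \notin AF F.
Proof. by move=> hF; apply: contra aE; apply: (subsetP (AF_sub hF)). Qed.
Lemma b_AF (F : {set {set 'I_n}}) : F \subset E -> b \notin AF F.
Proof. by move=> hF; apply: contra bE; apply: (subsetP (AF_sub hF)). Qed.

Lemma big_sub (F X : {set {set 'I_n}}) : F \subset E -> X \subset b |: (a |: AF F) -> X \subset E'.
Proof.
move=> hF hX; apply/subsetP => h /(subsetP hX); rewrite inE' !inE.
case/orP => [->//|/orP [/eqP ->|/and3P [hf hg hh]]].
  by rewrite eqxx notf_s orbT.
by rewrite hf hg (subsetP hF) // !orbT.
Qed.

Lemma F_AF (F : {set {set 'I_n}}) : hsp F -> F \subset E -> hsp (f |: AF F).
Proof.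
move=> hp hF; apply: (hsp_mono _ (out_irr hst tw hF gout hp)).
apply/subsetP => h; rewrite !inE => /andP [hg hh]; rewrite hg hh andbT.
by case: (h == f).
Qed.

Lemma psi_props (F : {set {set 'I_n}}) : F \subset E -> hsp F ->
  [/\ psi F \subset E', #|psi F| = #|F| & hsp (psi F)].
Proof.
move=> hF hp.
have nA := a_AF hF; have nB := b_AF hF.
have cF : #|F| = (g \in F) + ((f \in F) + #|AF F|).
  rewrite (cardsD1 g F) (cardsD1 f (F :\ g)) /AF.
  by rewrite !inE notf_g.
rewrite /psi; case: ifP => hA; last first.
- have hfF : f \in F.
    apply: contraFT hA => hf; apply: (hsp_mono _ (out_irr hst tw hF gout hp)).
    by apply/subsetP => h; rewrite !inE => /andP [-> hh]; rewrite hh !andbT; apply: contraNneq hf => <-.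
  have hq := F_AF hp hF.
  have [hx _ _ _] := Qfacts (negbT hA) hq.
  have hp2 : forall X : {set {set 'I_n}}, b \in X -> a \in X -> hsp X.
    by move=> X h1 h2; apply: (hsp2 hst vs vt).
  case: ifP => hg; split.
  + by apply: (big_sub hF); apply/subsetP.
  + by rewrite cF hg hfF !cardsU1 !in_setU1 negb_or (eq_sym b a) ab nA nB.
  + by apply: hp2; rewrite !inE eqxx ?orbT.
  + apply: (big_sub hF); apply/subsetP => h; rewrite !inE.
    by case: (h == b); case: (h == a) => //= /andP [].
  + have nA' : a \notin AF F :\ xch (AF F) by apply: contra nA; apply: (subsetP (subD1set _ _)).
    have nB' : b \notin AF F :\ xch (AF F) by apply: contra nB; apply: (subsetP (subD1set _ _)).
    by rewrite cF hg hfF !cardsU1 !in_setU1 negb_or (eq_sym b a) ab nA' nB' (cardsD1 (xch (AF F)) (AF F)) hx.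
  + by apply: hp2; rewrite !inE eqxx ?orbT.
- have hsub : forall X : {set {set 'I_n}}, AF F \subset X -> hsp X by move=> X hX; exact: hsp_mono hX hA.
  case: ifP => hf; case: ifP => hg; split.
  all: try (apply: (big_sub hF); apply/subsetP => h; rewrite !inE; by case: (h == b); case: (h == a)).
  all: try (apply: hsub; apply/subsetP => h hh; rewrite ?in_setU1 hh ?orbT //).
  all: rewrite cF hf hg /= ?cardsU1 ?in_setU1 ?negb_or ?nA ?nB ?ab //.
  by rewrite eq_sym ab.
Qed.


Lemma remX (X : {set {set 'I_n}}) : a \notin X -> b \notin X ->
  [/\ (b |: (a |: X)) :\ b :\ a = X, (b |: X) :\ b :\ a = X, (a |: X) :\ b :\ a = X & X :\ b :\ a = X].
Proof.
move=> nA nB; split; apply/setP => h; rewrite !inE;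
  (case: (eqVneq h b) => [->|hb]; [|case: (eqVneq h a) => [->|ha]]) => //=; rewrite ?eqxx ?(negbTE nA) ?(negbTE nB) ?(negbTE ab) ?andbF //=.
Qed.

Lemma fF (F : {set {set 'I_n}}) : F \subset E -> hsp F -> ~~ hsp (AF F) -> f \in F.
Proof.
move=> hF hp hA; apply: contraNT hA => hf; apply: (hsp_mono _ (out_irr hst tw hF gout hp)).
by apply/subsetP => h; rewrite !inE => /andP [-> hh]; rewrite hh !andbT; apply: contraNneq hf => <-.
Qed.

Lemma psi_rec (F : {set {set 'I_n}}) : F \subset E -> hsp F ->
  [/\ hsp (AF F) -> [/\ psi F :\ b :\ a = AF F, (a \in psi F) = (g \in F) & (b \in psi F) = (f \in F)],
      ~~ hsp (AF F) -> g \in F -> psi F :\ b :\ a = AF F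
    & ~~ hsp (AF F) -> g \notin F -> psi F :\ b :\ a = AF F :\ xch (AF F)].
Proof.
move=> hF hp; have nA := a_AF hF; have nB := b_AF hF.
have nA' : a \notin AF F :\ xch (AF F) by apply: contra nA; apply: (subsetP (subD1set _ _)).
have nB' : b \notin AF F :\ xch (AF F) by apply: contra nB; apply: (subsetP (subD1set _ _)).
have ba : b != a by rewrite eq_sym ab.
split.
- move=> hA; rewrite /psi hA; case: (remX nA nB) => [r1 r2 r3 r4].
  by case: ifP => hf; case: ifP => hg; rewrite ?r1 ?r2 ?r3 ?r4 ?in_setU1 ?eqxx ?(negbTE nA) ?(negbTE nB) ?(negbTE ab) ?(negbTE ba) ?orbT ?orbF.
- move=> hA hg; rewrite /psi (negbTE hA) hg; by case: (remX nA nB).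
- move=> hA hg; rewrite /psi (negbTE hA) (negbTE hg); by case: (remX nA' nB').
Qed.

Lemma psi_inj (F1 F2 : {set {set 'I_n}}) : F1 \subset E -> hsp F1 -> F2 \subset E -> hsp F2 ->
  psi F1 = psi F2 -> F1 = F2.
Proof.
move=> hF1 hp1 hF2 hp2 e.
have [r1 r1g r1n] := psi_rec hF1 hp1; have [r2 r2g r2n] := psi_rec hF2 hp2.
have nX : forall F : {set {set 'I_n}}, ~~ hsp (AF F) -> ~~ hsp (AF F :\ xch (AF F)).
  by move=> F hA; apply: contra hA; apply: hsp_mono; exact: subD1set.
case: (boolP (hsp (AF F1))) => h1; case: (boolP (hsp (AF F2))) => h2.
- case: (r1 h1) => [e1 a1 b1]; case: (r2 h2) => [e2 a2 b2].
  apply: (@recF _ g f); first by change (AF F1 = AF F2); rewrite -e1 -e2 e.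
  + by rewrite -a1 -a2 e.
  + by rewrite -b1 -b2 e.
- exfalso; case: (r1 h1) => [e1 _ _].
  have hr : hsp (psi F2 :\ b :\ a) by rewrite -e e1.
  case: (boolP (g \in F2)) => hg.
  + by move: hr; rewrite (r2g h2 hg) (negbTE h2).
  + by move: hr; rewrite (r2n h2 hg) (negbTE (nX _ h2)).
- exfalso; case: (r2 h2) => [e2 _ _].
  have hr : hsp (psi F1 :\ b :\ a) by rewrite e e2.
  case: (boolP (g \in F1)) => hg.
  + by move: hr; rewrite (r1g h1 hg) (negbTE h1).
  + by move: hr; rewrite (r1n h1 hg) (negbTE (nX _ h1)).
- have f1 := fF hF1 hp1 h1; have f2 := fF hF2 hp2 h2.
  have q1 := F_AF hp1 hF1; have q2 := F_AF hp2 hF2.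
  case: (Qfacts h1 q1) => [x1 n1 xr1 _]; case: (Qfacts h2 q2) => [x2 n2 xr2 _].
  case: (boolP (g \in F1)) => g1; case: (boolP (g \in F2)) => g2.
  + apply: (@recF _ g f); rewrite ?g1 ?g2 ?f1 ?f2 //.
    by change (AF F1 = AF F2); rewrite -(r1g h1 g1) -(r2g h2 g2) e.
  + exfalso; have ee : AF F1 = AF F2 :\ xch (AF F2) by rewrite -(r1g h1 g1) -(r2n h2 g2) e.
    by move: n2; rewrite -ee q1.
  + exfalso; have ee : AF F2 = AF F1 :\ xch (AF F1) by rewrite -(r2g h2 g2) -(r1n h1 g1) e.
    by move: n1; rewrite -ee q2.
  + have ee : AF F1 :\ xch (AF F1) = AF F2 :\ xch (AF F2) by rewrite -(r1n h1 g1) -(r2n h2 g2) e.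
    apply: (@recF _ g f); rewrite ?(negbTE g1) ?(negbTE g2) ?f1 ?f2 //.
    change (AF F1 = AF F2).
    have xx : xch (AF F1) = xch (AF F2) := etrans (esym xr1) (etrans (congr1 xr ee) xr2).
    by rewrite -(setD1K x1) -(setD1K x2) ee xx.
Qed.


Lemma T2_le i : Ncount 3 E s t i <= Ncount 3 E' s t i.
Proof. apply: (count_le (psi := psi)); [exact: psi_props | exact: psi_inj]. Qed.

Lemma T2_lt : Ncount 3 E s t #|[set a; b]| < Ncount 3 E' s t #|[set a; b]|.
Proof.
apply: (count_lt (psi := psi)); [exact: psi_props | exact: psi_inj | | |].
- by apply/subsetP => h; rewrite !inE => /orP [] /eqP ->; rewrite eqxx ?notf_s ?orbT.
- by apply: (hsp2 hst vs vt); rewrite !inE eqxx ?orbT.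
move=> F hF hp e.
have hnA := a_AF hF.
have r0 : psi F :\ b :\ a = set0.
  rewrite e; apply/setP => h; rewrite !inE.
  by case: (h == b); case: (h == a); rewrite ?andbF ?andbT.
have [r1 r1g r1n] := psi_rec hF hp.
case: (boolP (hsp (AF F))) => hA.
- case: (r1 hA) => [e1 _ _]; move: hA; rewrite -e1 r0 => h0.
  have ts : t != s by rewrite eq_sym.
  have := @hsp_none2 n s t s t set0 hst hst hst ts (sub0set _).
  by rewrite h0.
- have q := F_AF hp hF; case: (Qfacts hA q) => [x1 _ _ [h1 hh]].
  case: (boolP (g \in F)) => hg.
  + by move: x1; rewrite -(r1g hA hg) r0 inE.
  + by move: hh; rewrite -(r1n hA hg) r0 inE.
Qed.

End T2.

Lemma s_edge_in n (E : {set {set 'I_n}}) (s : 'I_n) (g : {set 'I_n}) :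
  simple_graph E -> g \in E -> s \in g -> g \subset closed_nbhd E s.
Proof.
move=> /forallP sg hg hs; have := sg g; rewrite hg /= => /cards2P [x [y [hxy ee]]]; subst g.
move: hs; rewrite !inE => /orP [] /eqP e; rewrite -e in hg *; rewrite sub2 s_in /= ?andbT.
- exact: tw_in_s hg.
- by apply: tw_in_s; rewrite setUC.
Qed.

Lemma t_edge_in n (E : {set {set 'I_n}}) (s t : 'I_n) (g : {set 'I_n}) :
  simple_graph E -> true_twins E s t -> g \in E -> t \in g -> g \subset closed_nbhd E s.
Proof.
move=> sg tw hg ht; rewrite tw; apply: s_edge_in => //.
Qed.

Lemma edge_eq n (u x y : 'I_n) : x != u -> ([set u; x] == [set u; y]) = (x == y).
Proof.
move=> hxu; apply/eqP/eqP => [e|->//].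
by move: (eq2_mem' e); rewrite (negbTE hxu) /= => /eqP.
Qed.

Lemma outs_lt n (E E' : {set {set 'I_n}}) (s : 'I_n) g :
  g \in outs E s -> outs E' s \subset outs E s :\ g -> #|outs E' s| < #|outs E s|.
Proof.
move=> hg hs; rewrite (cardsD1 g (outs E s)) hg add1n ltnS; exact: subset_leq_card.
Qed.

Section DS.
Variables (n : nat) (E : {set {set 'I_n}}) (s t v : 'I_n) (g1 g2 : {set 'I_n}).
Hypotheses (tt : two_terminal E s t) (tw : true_twins E s t) (g1E : g1 \in E)
  (g1out : ~~ (g1 \subset closed_nbhd E s)) (vout : v \notin closed_nbhd E s)
  (g2E : g2 \in E) (g21 : g2 != g1) (sg2 : s \notin g2) (tg2 : t \notin g2).

Local Notation a := [set s; v].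
Local Notation b := [set v; t].
Local Notation R := (closed_nbhd E s).

Let hst : s != t. Proof. by case/andP: tt. Qed.
Let sg : simple_graph E. Proof. by case/andP: tt. Qed.

Lemma ds_sg1 : s \notin g1.
Proof. by apply: contra g1out; apply: s_edge_in. Qed.
Lemma ds_tg1 : t \notin g1.
Proof. by apply: contra g1out; apply: t_edge_in. Qed.
Lemma ds_vs : v != s. Proof. by apply: contra vout => /eqP ->; exact: s_in. Qed.
Lemma ds_vt : v != t. Proof. by apply: contra vout => /eqP ->; exact: t_in. Qed.
Lemma ds_aE : a \notin E. Proof. by apply: contra vout => h; exact: tw_in_s h. Qed.
Lemma ds_bE : b \notin E. Proof. by apply: contra vout => h; exact: tw_in_t tw h. Qed.

Definition DE := swap (swap E g1 a) g2 b.

Lemma inDE h : (h \in DE) = (h == b) || (h != g2) && ((h == a) || (h != g1) && (h \in E)).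
Proof. by rewrite /DE /swap !inE. Qed.

Lemma ds_card : #|DE| = #|E|.
Proof.
rewrite /DE card_swap ?card_swap //; first exact: ds_aE.
- by rewrite /swap !inE g2E g21 orbT.
- rewrite /swap in_setU1 negb_or; apply/andP; split.
    by apply/eqP => /eq2_mem'; rewrite eq_sym (negbTE hst) eq_sym (negbTE ds_vt).
  by apply: contra ds_bE => /setD1P [].
Qed.

Lemma ds_tt : two_terminal DE s t.
Proof.
rewrite /two_terminal hst andbT; apply/forallP => h; apply/implyP; rewrite inDE.
case/orP => [/eqP -> | /andP [_ /orP [/eqP -> | /andP [_ hh]]]].
- by rewrite cards2 (negbTE ds_vt).
- by rewrite cards2 (eq_sym s v) ds_vs.
- by move/forallP: sg => /(_ h); rewrite hh.
Qed.

Lemma ds_Ns : closed_nbhd DE s = v |: R.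
Proof.
apply/setP => x; rewrite (inN DE s x) inDE in_setU1 (inN E s x).
case: (eqVneq x s) => [->|hxs]; first by rewrite /= orbT.
have nb : [set s; x] != b.
  by apply/eqP => /eq2_mem; rewrite eq_sym (negbTE ds_vs) (negbTE hst).
have n2 : [set s; x] != g2 by apply: contraNneq sg2 => <-; exact: set21.
have n1 : [set s; x] != g1 by apply: contraNneq ds_sg1 => <-; exact: set21.
by rewrite (negbTE nb) n2 n1 edge_eq.
Qed.

Lemma ds_Nt : closed_nbhd DE t = v |: R.
Proof.
rewrite tw; apply/setP => x; rewrite (inN DE t x) inDE in_setU1 (inN E t x).
case: (eqVneq x t) => [->|hxt]; first by rewrite /= orbT.
have nb : ([set t; x] == b) = (x == v) by rewrite (setUC [set v] [set t]) edge_eq.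
have na : [set t; x] != a.
  by apply/eqP => /eq2_mem; rewrite eq_sym (negbTE hst) eq_sym (negbTE ds_vt).
have n2 : [set t; x] != g2 by apply: contraNneq tg2 => <-; exact: set21.
have n1 : [set t; x] != g1 by apply: contraNneq ds_tg1 => <-; exact: set21.
by rewrite nb n2 n1 (negbTE na).
Qed.

Lemma ds_tw : true_twins DE s t.
Proof. by rewrite /true_twins ds_Ns ds_Nt. Qed.

Lemma ds_outs : #|outs DE s| < #|outs E s|.
Proof.
apply: (outs_lt (g := g1)); first by rewrite inE g1E g1out.
apply/subsetP => h; rewrite /outs [in X in X -> _]inE ds_Ns inDE => /andP [hh hn].
rewrite in_setD1 inE.
case/orP: hh => [/eqP ehb | /andP [_ /orP [/eqP eha | /andP [hg1 hh]]]].
- by move: hn; rewrite ehb sub2 setU11 /= in_setU1 (t_in tw) orbT.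
- by move: hn; rewrite eha sub2 setU11 andbT in_setU1 s_in orbT.
- rewrite hg1 hh /=; apply: contra hn => hs; apply: (subset_trans hs).
  by apply/subsetP => y hy; rewrite in_setU1 hy orbT.
Qed.


Local Notation hsp F := (has_short_path 3 F s t).

Lemma t3_le1 i : Ncount 3 E s t i <= Ncount 3 (swap E g1 a) s t i.
Proof.
apply: swap_le => //; first exact: ds_aE.
move=> F hF hp hg; apply: (hsp_mono _ (out_irr hst tw hF g1out hp)); exact: subsetUr.
Qed.

Lemma g2E1 : g2 \in swap E g1 a.
Proof. by rewrite /swap !inE g2E g21 orbT. Qed.

Lemma bE1 : b \notin swap E g1 a.
Proof.
rewrite /swap in_setU1 negb_or; apply/andP; split.
  by apply/eqP => /eq2_mem'; rewrite eq_sym (negbTE hst) eq_sym (negbTE ds_vt).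
by apply: contra ds_bE => /setD1P [].
Qed.

Lemma ag2 : a != g2.
Proof. by apply: contraNneq sg2 => <-; exact: set21. Qed.

Lemma t3_hyp2 (g2out : ~~ (g2 \subset R)) (F : {set {set 'I_n}}) :
  F \subset swap E g1 a -> hsp F -> g2 \in F -> hsp (swap F g2 b).
Proof.
move=> hF hp hg; case: (boolP (a \in F)) => ha.
- apply: (hsp2 hst ds_vs ds_vt); rewrite /swap !inE ?eqxx ?orbT //.
  by rewrite ag2 ha orbT.
- have hFE : F \subset E.
    apply/subsetP => h hh; have := subsetP hF h hh; rewrite /swap !inE => /orP [/eqP eh|/andP [_ //]].
    by rewrite -eh hh in ha.
  apply: (hsp_mono _ (out_irr hst tw hFE g2out hp)); exact: subsetUr.
Qed.

Lemma t3_le2 (g2out : ~~ (g2 \subset R)) i : Ncount 3 (swap E g1 a) s t i <= Ncount 3 DE s t i.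
Proof. apply: swap_le; [exact: g2E1 | exact: bE1 | exact: t3_hyp2]. Qed.

Lemma t3_lt (g2out : ~~ (g2 \subset R)) :
  Ncount 3 (swap E g1 a) s t #|[set a; b]| < Ncount 3 DE s t #|[set a; b]|.
Proof.
apply: swap_lt; [exact: g2E1 | exact: bE1 | exact: t3_hyp2 | | | |].
- apply/subsetP => h; rewrite inDE !inE => /orP [] /eqP ->; rewrite ?eqxx ?orbT //=.
  by rewrite ag2 orbT.
- by apply: (hsp2 hst ds_vs ds_vt); rewrite !inE eqxx ?orbT.
- by rewrite !inE eqxx orbT.
have mem : forall h, h \in swap [set a; b] b g2 -> (h == g2) || (h == a).
  move=> h; rewrite /swap !inE => /orP [->//|/andP [hb /orP [->|/eqP e]]]; first by rewrite orbT.
  by rewrite e eqxx in hb.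
have ns : forall w, [set s; w] != g2 by move=> w; apply: contraNneq sg2 => <-; exact: set21.
have nt : forall w, [set w; t] != g2 by move=> w; apply: contraNneq tg2 => <-; exact: set22.
have nta : forall w, [set w; t] != a.
  by move=> w; apply/eqP => /eq2_mem'; rewrite eq_sym (negbTE hst) eq_sym (negbTE ds_vt).
apply: (hsp_none (x := v) (y := t)) => //; first exact: ds_vt.
- by apply/negP => /mem; rewrite (negbTE (ns t)) (negbTE (nta s)).
- by apply/negP => /mem; rewrite (negbTE (nt v)) (negbTE (nta v)).
- by move=> w hw /mem; rewrite (negbTE (ns w)) /= edge_eq // => /eqP.
- by move=> w hw /mem; rewrite (negbTE (nt w)) (negbTE (nta w)).
Qed.

End DS.

Lemma N_swap n (E : {set {set 'I_n}}) (u : 'I_n) (g f : {set 'I_n}) :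
  u \notin f -> u \notin g -> closed_nbhd (swap E g f) u = closed_nbhd E u.
Proof.
move=> uf ug; apply/setP => x; rewrite (inN (swap E g f)) (inN E) /swap in_setU1 in_setD1.
have n1 : [set u; x] != f by apply: contraNneq uf => <-; exact: set21.
have n2 : [set u; x] != g by apply: contraNneq ug => <-; exact: set21.
by rewrite (negbTE n1) n2.
Qed.

Section SS.
Variables (n : nat) (E : {set {set 'I_n}}) (s t c1 c2 : 'I_n) (g : {set 'I_n}).
Hypotheses (tt : two_terminal E s t) (tw : true_twins E s t) (gE : g \in E)
  (gout : ~~ (g \subset closed_nbhd E s))
  (c1R : c1 \in closed_nbhd E s) (c2R : c2 \in closed_nbhd E s)
  (c1s : c1 != s) (c1t : c1 != t) (c2s : c2 != s) (c2t : c2 != t) (c12 : c1 != c2)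
  (fnE : [set c1; c2] \notin E).

Local Notation f := [set c1; c2].
Local Notation hsp F := (has_short_path 3 F s t).
Local Notation R := (closed_nbhd E s).

Let hst : s != t. Proof. by case/andP: tt. Qed.
Let sg : simple_graph E. Proof. by case/andP: tt. Qed.
Let sg1 : s \notin g. Proof. by apply: contra gout; apply: s_edge_in. Qed.
Let tg1 : t \notin g. Proof. by apply: contra gout; apply: t_edge_in. Qed.
Let sf : s \notin f. Proof. by rewrite !inE negb_or !(eq_sym s) c1s c2s. Qed.
Let tf : t \notin f. Proof. by rewrite !inE negb_or !(eq_sym t) c1t c2t. Qed.

Definition SE := swap E g f.

Lemma ss_card : #|SE| = #|E|.
Proof. exact: card_swap. Qed.

Lemma ss_tt : two_terminal SE s t.
Proof.
rewrite /two_terminal hst andbT; apply/forallP => h; apply/implyP; rewrite /SE /swap !inE.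
case/orP => [/eqP -> | /andP [_ hh]]; first by rewrite cards2 c12.
by move/forallP: sg => /(_ h); rewrite hh.
Qed.

Lemma ss_Ns : closed_nbhd SE s = R.
Proof. exact: N_swap. Qed.

Lemma ss_tw : true_twins SE s t.
Proof. by rewrite /true_twins ss_Ns /SE N_swap. Qed.

Lemma ss_outs : #|outs SE s| < #|outs E s|.
Proof.
apply: (outs_lt (g := g)); first by rewrite inE gE gout.
apply/subsetP => h H; rewrite in_setD1 inE; move: H.
rewrite inE ss_Ns /SE /swap in_setU1 in_setD1 => /andP [hh hn].
case/orP: hh => [/eqP ehf | /andP [hg hh]].
- by move: hn; rewrite ehf sub2 c1R c2R.
- by rewrite hg hh hn.
Qed.

Lemma ss_hyp (F : {set {set 'I_n}}) : F \subset E -> hsp F -> g \in F -> hsp (swap F g f).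
Proof. move=> hF hp hg; apply: (hsp_mono _ (out_irr hst tw hF gout hp)); exact: subsetUr. Qed.

Lemma ss_le i : Ncount 3 E s t i <= Ncount 3 SE s t i.
Proof. apply: swap_le => //; exact: ss_hyp. Qed.

Lemma ss_lt : Ncount 3 E s t #|[set [set s; c1]; f; [set c2; t]]| < Ncount 3 SE s t #|[set [set s; c1]; f; [set c2; t]]|.
Proof.
have e1 : [set s; c1] \in E by apply: tw_edge_s.
have e2 : [set c2; t] \in E by apply: (tw_edge_t tw).
have n1 : [set s; c1] != g by apply: contraNneq sg1 => <-; exact: set21.
have n2 : [set c2; t] != g by apply: contraNneq tg1 => <-; exact: set22.
apply: swap_lt => //; first exact: ss_hyp.
- apply/subsetP => h; rewrite /swap in_setU1 in_setD1 !inE => /orP [/orP [] |] /eqP ->;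
    rewrite ?eqxx ?n1 ?n2 ?e1 ?e2 ?orbT //.
- by apply: (hsp3 hst c1s c1t c2s c2t c12); rewrite !inE eqxx ?orbT.
- by rewrite !inE eqxx orbT.
apply/negP => hp.
have hsub : swap [set [set s; c1]; f; [set c2; t]] f g \subset E.
  apply/subsetP => h; rewrite /swap in_setU1 in_setD1 !inE => /orP [/eqP -> //|/andP [hf /orP [/orP [] |] /eqP eh]].
  + by rewrite eh.
  + by rewrite eh eqxx in hf.
  + by rewrite eh.
have := out_irr hst tw hsub gout hp.
apply/negP; apply: (hsp_none2 (x := c1) (y := c2)) => //.
apply/subsetP => h; rewrite /swap in_setD1 in_setU1 in_setD1 !inE.
case/andP => hg /orP [/eqP eh|/andP [hf /orP [/orP [] |]]].
- by rewrite eh eqxx in hg.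
- by move=> ->.
- by move=> /eqP eh; rewrite eh eqxx in hf.
- by move=> ->; rewrite orbT.
Qed.

End SS.

Lemma smallR n (R : {set 'I_n}) (s t : 'I_n) :
  ~~ [exists c1, exists c2, [&& c1 \in R, c1 != s, c1 != t, c2 \in R, c2 != s, c2 != t & c1 != c2]] ->
  #|R| <= 3.
Proof.
move=> hn.
have h1 : #|R :\ s :\ t| <= 1.
  apply/card_le1_eqP => x y; rewrite !in_setD1 => /and3P [xt xs xR] /and3P [yt ys yR].
  apply/eqP; apply: contraNT hn => hxy; apply/existsP; exists x; apply/existsP; exists y.
  by rewrite xR xs xt yR ys yt eq_sym hxy.
rewrite (cardsD1 s R) (cardsD1 t (R :\ s)).
exact: leq_trans (leq_add (leq_b1 _) (leq_add (leq_b1 _) h1)) _.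
Qed.

Lemma inside_card n (E : {set {set 'I_n}}) (R : {set 'I_n}) :
  simple_graph E -> #|[set h in E | h \subset R]| <= 'C(#|R|, 2).
Proof.
move=> /forallP sg; rewrite -cards_draws; apply: subset_leq_card; apply/subsetP => h.
rewrite !inE => /andP [hE ->] /=; by have := sg h; rewrite hE.
Qed.

Lemma bin2_le3 k : k <= 3 -> 'C(k, 2) <= 3.
Proof. by case: k => [|[|[|[|]]]]. Qed.

Lemma stronger_of n m (E E' : {set {set 'I_n}}) (s t : 'I_n) j :
  (forall i, Ncount 3 E s t i <= Ncount 3 E' s t i) -> 1 <= j <= m ->
  Ncount 3 E s t j < Ncount 3 E' s t j -> stronger 3 m E' s t E s t.
Proof. by move=> h1 hj h2; split; [move=> i _; exact: h1 | exists j]. Qed.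

Lemma stronger_trans n m (E1 E2 E3 : {set {set 'I_n}}) (s t : 'I_n) :
  stronger 3 m E3 s t E2 s t -> stronger 3 m E2 s t E1 s t -> stronger 3 m E3 s t E1 s t.
Proof.
move=> [h1 _] [h2 [j [hj h3]]]; split.
- by move=> i hi; apply: leq_trans (h2 i hi) (h1 i hi).
- by exists j; split => //; apply: leq_trans h3 (h1 j hj).
Qed.

Lemma card3 (T : finType) (x y z : T) : #|[set x; y; z]| <= 3.
Proof. rewrite cardsU; apply: leq_trans (leq_subr _ _) _; rewrite cards2 cards1; by case: (x != y). Qed.

Lemma step n m (E : {set {set 'I_n}}) (s t : 'I_n) : 5 <= m -> two_terminal E s t -> #|E| = m ->
  true_twins E s t -> outs E s != set0 ->
  exists E', [/\ two_terminal E' s t, #|E'| = m, true_twins E' s t,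
    #|outs E' s| < #|outs E s| & stronger 3 m E' s t E s t].
Proof.
move=> hm tt hc tw ho.
have hst : s != t by case/andP: tt.
have sg : simple_graph E by case/andP: tt.
case/set0Pn: ho => g; rewrite inE => /andP [gE gout].
have [v vg vout] := subsetPn gout.
have sR := s_in E s; have tR := t_in tw.
case: (boolP [exists c1, exists c2, [&& c1 \in closed_nbhd E s, c1 != s, c1 != t,
    c2 \in closed_nbhd E s, c2 != s, c2 != t & c1 != c2]]).
- case/existsP => c1 /existsP [c2 /and4P [c1R c1s c1t /and4P [c2R c2s c2t c12]]].
  case: (boolP ([set c1; c2] \in E)) => fE.
  + have fg := notf_g gout c1R c2R.
    have sf : s \notin [set c1; c2] by rewrite !inE negb_or !(eq_sym s) c1s c2s.
    have tf : t \notin [set c1; c2] by rewrite !inE negb_or !(eq_sym t) c1t c2t.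
    exists (DE E s t v g [set c1; c2]); split.
    * by apply: ds_tt.
    * by rewrite ds_card.
    * by apply: ds_tw.
    * by apply: ds_outs.
    * apply: (stronger_of (j := #|[set [set s; v]; [set v; t]]|)).
      - by move=> i; apply: T2_le.
      - by rewrite cards2 (ab (E := E) hst vout) /=; apply: leq_trans hm.
      - by apply: T2_lt.
  + exists (SE E c1 c2 g); split.
    * by apply: (@ss_tt _ _ _ t).
    * by rewrite ss_card.
    * by apply: (@ss_tw _ _ _ t).
    * by apply: (@ss_outs _ _ _ t).
    * apply: (stronger_of (j := #|[set [set s; c1]; [set c1; c2]; [set c2; t]]|)).
      - by move=> i; apply: ss_le.
      - apply/andP; split.
          by rewrite card_gt0; apply/set0Pn; exists [set c1; c2]; rewrite !inE eqxx orbT.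
        by apply: leq_trans (card3 _ _ _) (leq_trans _ hm).
      - by apply: (@ss_lt _ _ _ t).
- move=> hno.
  have hR := smallR hno.
  have hout : 2 <= #|outs E s|.
    have h1 := leq_trans (inside_card (closed_nbhd E s) sg) (bin2_le3 hR).
    have h2 : #|E| <= #|[set h in E | h \subset closed_nbhd E s]| + #|outs E s|.
      rewrite -cardsUI; apply: leq_trans (leq_addr _ _); apply: subset_leq_card.
      apply/subsetP => h hE; rewrite /outs !inE hE /=; by case: (h \subset _).
    lia.
  have : 0 < #|outs E s :\ g|.
    by move: hout; rewrite (cardsD1 g (outs E s)) inE gE gout /=; lia.
  rewrite card_gt0 => /set0Pn [g2]; rewrite in_setD1 inE => /and3P [g2g g2E g2out].
  have sg2 : s \notin g2 by apply: contra g2out; apply: s_edge_in.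
  have tg2 : t \notin g2 by apply: contra g2out; apply: t_edge_in.
  exists (DE E s t v g g2); split.
  * by apply: ds_tt.
  * by rewrite ds_card.
  * by apply: ds_tw.
  * by apply: ds_outs.
  * apply: (stronger_of (j := #|[set [set s; v]; [set v; t]]|)).
    - move=> i; apply: leq_trans (t3_le1 tt tw gE gout vout i) _.
      by apply: t3_le2.
    - by rewrite cards2 (ab (E := E) hst vout) /=; apply: leq_trans hm.
    - apply: leq_trans _ (t3_lt (g1 := g) tt tw vout g2E g2g sg2 tg2 g2out).
      by rewrite ltnS; apply: t3_le1.
Qed.

Lemma main_ind n m (s t : 'I_n) (hm : 5 <= m) k : forall E : {set {set 'I_n}},
  #|outs E s| <= k -> two_terminal E s t -> #|E| = m -> true_twins E s t -> outs E s != set0 ->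
  exists EH : {set {set 'I_n}}, [/\ two_terminal EH s t, #|EH| = m, true_twins EH s t,
    outs EH s = set0 & stronger 3 m EH s t E s t].
Proof.
elim: k => [|k IH] E hk tt hc tw ho.
  by move: ho; rewrite -card_gt0; move: hk; case: #|outs E s|.
have [E1 [tt1 hc1 tw1 hlt hs1]] := step hm tt hc tw ho.
case: (eqVneq (outs E1 s) set0) => h1.
  by exists E1; split.
have hk1 : #|outs E1 s| <= k by rewrite -ltnS; apply: leq_trans hlt hk.
have [EH [ttH hcH twH hoH hsH]] := IH E1 hk1 tt1 hc1 tw1 h1.
exists EH; split => //; exact: stronger_trans hsH hs1.
Qed.

Theorem lemma9 (n m : nat) (hn : 5 <= n) (hm : 5 <= m)
    (EG : {set {set 'I_n}}) (s t : 'I_n) :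
  two_terminal EG s t -> #|EG| = m ->
  true_twins EG s t ->
  (exists e, irrelevant 3 EG s t e) ->
  exists (EH : {set {set 'I_n}}) (sH tH : 'I_n),
    [/\ two_terminal EH sH tH, #|EH| = m, true_twins EH sH tH,
        (forall e, ~ irrelevant 3 EH sH tH e)
      & stronger 3 m EH sH tH EG s t].
Proof.
move=> tt hc tw [e he].
have ho : outs EG s != set0.
  by apply/eqP => h; exact: (no_irr tt tw h he).
have [EH [ttH hcH twH hoH hsH]] := main_ind hm (leqnn _) tt hc tw ho.
exists EH, s, t; split => //; exact: no_irr.
Qed.
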